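(* Let $D<0$ be a prime discriminant, $\mu\in L'/L$, $m\in\mathbb{Z}+Q(\mu)$ with $m>0$, and fix $X_0\in L^0_{m,\mu}$. Then $L^0_{m,\mu}=V(\mathbb{Q})\cap UX_0$.
   Context: A prime discriminant is $D\in\{-4,-8\}$ or $D=-\ell$, $\ell\equiv3\pmod4$ prime. $\mathcal{O}_D$ is the ring of integers of $\mathbb{Q}(\sqrt D)$, $\mathfrak{d}_D^{-1}=\frac1{\sqrt D}\mathcal{O}_D$. $L=\{\begin{pmatrix}a&b\\\bar b&c\end{pmatrix}:a,c\in\mathbb{Z},b\in\mathcal{O}_D\}$, $Q(X)=ac-|b|^2$, dual $L'$ with $b\in\mathfrak{d}_D^{-1}$, $V=L\otimes\mathbb{Q}$, $G=\mathrm{SO}(V)$. $X\in L'$ is primitive if $\frac1rX\notin L'$ for every integer $r>1$; $L^0_{m,\mu}$ is the set of primitive $X\in L+\mu$ with $Q(X)=m$. $U=\prod_pU_p$ with $U_p=\{g\in G(\mathbb{Q}_p):gL_p=L_p,\ g\text{ trivial on }L'_p/L_p\}$ ($L_p=L\otimes\mathbb{Z}_p$, $L'_p=L'\otimes\mathbb{Z}_p$); $U$ acts on $V(\mathbb{A}_f)=V\otimes\mathbb{A}_f$ and $V(\mathbb{Q})\subset V(\mathbb{A}_f)$ diagonally. *)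

(* Defs.v *)
From HB Require Import structures.
From mathcomp Require Import all_boot all_order all_algebra.
From mathcomp Require Import boolp.
Set Implicit Arguments.
Unset Strict Implicit.
Unset Printing Implicit Defensive.
Import Order.TTheory GRing.Theory Num.Theory.
Local Open Scope ring_scope.

(* The p-adic integers Z_p, built as the inverse limit lim_n Z/p^n Z:       *)
(* an element is a sequence (a_n)_n of integers with a_n = a_{n+1} mod p^n  *)
(* and 0 <= a_n < p^n (the reduced representative of the class mod p^n).   *)
(* As for MathComp's 'Z_p, the modulus used is maxn p 2 (= p for p prime),  *)
(* so that Zp p is always a nontrivial commutative ring.                    *)

Definition zpmod (p n : nat) : int := ((maxn p 2)%:Z ^+ n)%R.

Record Zp (p : nat) := MkZp {
  zseq : nat -> int ;
  zseqP : forall n, zseq n = modz (zseq n.+1) (zpmod p n) }.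

Arguments MkZp {p}.
Arguments zseq {p}.

HB.instance Definition _ p := gen_eqMixin (Zp p).
HB.instance Definition _ p := gen_choiceMixin (Zp p).

Section ZpRing.
Variable p : nat.
Local Notation Q n := (zpmod p n).

Lemma zp_eq (a b : Zp p) : zseq a = zseq b -> a = b.
Proof.
case: a b => [f fP] [g gP] /= efg; subst g.
by rewrite (Prop_irrelevance fP gP).
Qed.

Lemma zpmodS_mod (m : int) n : modz (modz m (Q n.+1)) (Q n) = modz m (Q n).
Proof.
rewrite {2}(divz_eq m (Q n.+1)) /zpmod exprS mulrA.
by rewrite -[in RHS]modzDml modzMl add0r.
Qed.

Lemma zred (a : Zp p) n : modz (zseq a n) (Q n) = zseq a n.
Proof. by rewrite [in RHS](zseqP a n) [in LHS](zseqP a n) modz_mod. Qed.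

Definition zp_lift1 (F : int -> int)
  (HF : forall x d, modz (F (modz x d)) d = modz (F x) d) (a : Zp p) : Zp p.
Proof.
refine (MkZp (fun n => modz (F (zseq a n)) (Q n)) _) => n.
by rewrite zpmodS_mod (zseqP a n) HF.
Defined.

Definition zp_lift2 (F : int -> int -> int)
  (HF : forall x y d, modz (F (modz x d) (modz y d)) d = modz (F x y) d)
  (a b : Zp p) : Zp p.
Proof.
refine (MkZp (fun n => modz (F (zseq a n) (zseq b n)) (Q n)) _) => n.
by rewrite zpmodS_mod (zseqP a n) (zseqP b n) HF.
Defined.

Definition zp_const (c : int) : Zp p.
Proof.
refine (MkZp (fun n => modz c (Q n)) _) => n.
by rewrite zpmodS_mod.
Defined.

Lemma zp_addP (x y d : int) : modz (modz x d + modz y d) d = modz (x + y) d.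
Proof. exact: modzDm. Qed.
Lemma zp_mulP (x y d : int) : modz (modz x d * modz y d) d = modz (x * y) d.
Proof. exact: modzMm. Qed.
Lemma zp_oppP (x d : int) : modz (- modz x d) d = modz (- x) d.
Proof. exact: modzNm. Qed.

Definition zp_zero := zp_const 0.
Definition zp_one := zp_const 1.
Definition zp_add := zp_lift2 zp_addP.
Definition zp_mul := zp_lift2 zp_mulP.
Definition zp_opp := zp_lift1 zp_oppP.

Lemma zp_addA : associative zp_add.
Proof. by move=> a b c; apply: zp_eq => /=; apply: funext => n /=; rewrite modzDml modzDmr addrA. Qed.
Lemma zp_addC : commutative zp_add.
Proof. by move=> a b; apply: zp_eq; apply: funext => n /=; rewrite addrC. Qed.
Lemma zp_add0 : left_id zp_zero zp_add.
Proof. by move=> a; apply: zp_eq; apply: funext => n /=; rewrite mod0z add0r zred. Qed.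
Lemma zp_addN : left_inverse zp_zero zp_opp zp_add.
Proof. by move=> a; apply: zp_eq; apply: funext => n /=; rewrite modzDml addNr. Qed.

HB.instance Definition _ := GRing.isZmodule.Build (Zp p) zp_addA zp_addC zp_add0 zp_addN.

Lemma zp_mulA : associative zp_mul.
Proof. by move=> a b c; apply: zp_eq; apply: funext => n /=; rewrite modzMml modzMmr mulrA. Qed.
Lemma zp_mulC : commutative zp_mul.
Proof. by move=> a b; apply: zp_eq; apply: funext => n /=; rewrite mulrC. Qed.
Lemma zp_mul1 : left_id zp_one zp_mul.
Proof. by move=> a; apply: zp_eq; apply: funext => n /=; rewrite modzMml mul1r zred. Qed.
Lemma zp_mulDl : left_distributive zp_mul zp_add.
Proof.
by move=> a b c; apply: zp_eq; apply: funext => n /=; rewrite modzMml modzDm mulrDl.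
Qed.
Lemma zp_one_neq0 : zp_one != 0.
Proof.
apply/eqP => /(f_equal (fun x : Zp p => zseq x 1%N)) /=.
rewrite mod0z modz_small // /zpmod expr1 ltz_nat.
by rewrite leq_max ltnSn orbT.
Qed.

HB.instance Definition _ := GRing.Zmodule_isComNzRing.Build (Zp p)
  zp_mulA zp_mulC zp_mul1 zp_mulDl zp_one_neq0.

End ZpRing.

(* The lattice L of Hermitian matrices [[a, b], [conj b, c]], a, c in Z,    *)
(* b in O_D.  We write O_D = Z + Z w with w = (t + sqrt D)/2, where         *)
(* t = 1 if D is odd (D = -l, l = 3 mod 4) and t = 0 if D in {-4,-8}; then  *)
(* |b1 + b2 w|^2 = b1^2 + t b1 b2 + n b2^2 with n = N(w) = (t - D)/4.        *)
(* V = L (x) Q is identified with column vectors (a, c, b1, b2) in Q^4      *)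
(* (coordinates w.r.t. the Z-basis of L), so that L = Z^4 and               *)
(* Q(X) = a c - |b|^2.  For a commutative ring R, the same formula defines  *)
(* the quadratic form on L (x) R = R^4 (used for R = Z_p).                   *)

Definition prime_disc (D : int) : Prop :=
  D = -4 \/ D = -8 \/
  exists l : nat, [/\ prime l, (l %% 4 = 3)%N & D = - (l%:Z)].

Definition disc_t (D : int) : int := (odd (absz D))%:Z.
Definition disc_n (D : int) : int := divz (disc_t D - D) 4.

Definition cA {R : Type} (x : 'cV[R]_4) : R := x (inord 0) 0.
Definition cC {R : Type} (x : 'cV[R]_4) : R := x (inord 1) 0.
Definition cB1 {R : Type} (x : 'cV[R]_4) : R := x (inord 2) 0.
Definition cB2 {R : Type} (x : 'cV[R]_4) : R := x (inord 3) 0.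

Definition normb {R : comNzRingType} (D : int) (b1 b2 : R) : R :=
  b1 ^+ 2 + (disc_t D)%:~R * b1 * b2 + (disc_n D)%:~R * b2 ^+ 2.

Definition Qf {R : comNzRingType} (D : int) (x : 'cV[R]_4) : R :=
  cA x * cC x - normb D (cB1 x) (cB2 x).

Definition bil {R : comNzRingType} (D : int) (x y : 'cV[R]_4) : R :=
  Qf D (x + y) - Qf D x - Qf D y.

Definition inL (x : 'cV[rat]_4) : Prop := forall i, x i 0 \is a Num.int.

Definition inL' (D : int) (x : 'cV[rat]_4) : Prop :=
  forall y, inL y -> bil D x y \is a Num.int.

Definition primitive (D : int) (x : 'cV[rat]_4) : Prop :=
  forall r : nat, (1 < r)%N -> ~ inL' D ((r%:R)^-1 *: x).

Definition L0 (D : int) (m : rat) (mu x : 'cV[rat]_4) : Prop :=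
  [/\ inL (x - mu), Qf D x = m & primitive D x].

(* Local data at a prime p.  An element g of G(Q_p) = SO(V)(Q_p) with       *)
(* g L_p = L_p is (in the Z-basis of L) a matrix g in M_4(Z_p) with          *)
(* det g = 1 preserving Q.  Vectors of V(Q) are compared in V(Q_p) after    *)
(* clearing denominators by a positive integer N (Z_p is torsion free).     *)

Definition toZp (p : nat) (v : 'cV[rat]_4) : 'cV[Zp p]_4 :=
  map_mx (fun r : rat => (numq r)%:~R) v.

Definition act_eq (p : nat) (g : 'M[Zp p]_4) (x y : 'cV[rat]_4) : Prop :=
  exists N : nat, [/\ (0 < N)%N, inL (N%:R *: x), inL (N%:R *: y) &
    g *m toZp p (N%:R *: x) = toZp p (N%:R *: y)].

(* g in U_p: g in SO(V)(Q_p), g L_p = L_p, g trivial on L'_p / L_p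
   (it suffices to test the last condition on the generators L' of L'_p:
    for X in L', g X - X in L_p). *)
Definition in_Up (D : int) (p : nat) (g : 'M[Zp p]_4) : Prop :=
  [/\ \det g = 1,
      forall x : 'cV[Zp p]_4, Qf D (g *m x) = Qf D x &
      forall x : 'cV[rat]_4, inL' D x ->
        exists N : nat, [/\ (0 < N)%N, inL (N%:R *: x) &
          exists z : 'cV[Zp p]_4,
            g *m toZp p (N%:R *: x) - toZp p (N%:R *: x) = N%:R *: z]].

Definition in_UX0 (D : int) (x0 x : 'cV[rat]_4) : Prop :=
  forall p : nat, prime p -> exists g : 'M[Zp p]_4, in_Up D g /\ act_eq g x0 x.

(* Main.v *)
From Pilot Require Import Defs.
From HB Require Import structures.
From mathcomp Require Import all_boot all_order all_algebra.
From mathcomp Require Import ring.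
From mathcomp Require Import boolp.
Import Order.TTheory GRing.Theory Num.Theory.
Local Open Scope ring_scope.
Set Implicit Arguments. Unset Strict Implicit. Unset Printing Implicit Defensive.
Notation ZP := Pilot.Defs.Zp.

Section G.
Variable R : comNzRingType.
Definition vec4 (a c b1 b2 : R) : 'cV[R]_4 := \col_(i < 4) nth 0 [:: a; c; b1; b2] i.
Definition M4 (f : nat -> nat -> R) : 'M[R]_4 := \matrix_(i < 4, j < 4) f i j.

Lemma cA4 a c b1 b2 : cA (vec4 a c b1 b2) = a.
Proof. by rewrite /cA mxE inordK. Qed.
Lemma cC4 a c b1 b2 : cC (vec4 a c b1 b2) = c.
Proof. by rewrite /cC mxE inordK. Qed.
Lemma cB14 a c b1 b2 : cB1 (vec4 a c b1 b2) = b1.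
Proof. by rewrite /cB1 mxE inordK. Qed.
Lemma cB24 a c b1 b2 : cB2 (vec4 a c b1 b2) = b2.
Proof. by rewrite /cB2 mxE inordK. Qed.

Lemma vec4E (x : 'cV[R]_4) : x = vec4 (cA x) (cC x) (cB1 x) (cB2 x).
Proof.
apply/matrixP => i j; rewrite ord1 !mxE /cA /cC /cB1 /cB2.
case: i => [[|[|[|[|k]]]] Hi] //=; congr (x _ _); apply: val_inj; rewrite /= inordK //.
Qed.

Lemma vec4_eq a c b1 b2 a' c' b1' b2' :
  a = a' -> c = c' -> b1 = b1' -> b2 = b2' -> vec4 a c b1 b2 = vec4 a' c' b1' b2'.
Proof. by move=> -> -> -> ->. Qed.

Lemma mulM4 f a c b1 b2 : M4 f *m vec4 a c b1 b2 =
  vec4 (f 0%N 0%N * a + f 0%N 1%N * c + f 0%N 2%N * b1 + f 0%N 3%N * b2)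
       (f 1%N 0%N * a + f 1%N 1%N * c + f 1%N 2%N * b1 + f 1%N 3%N * b2)
       (f 2%N 0%N * a + f 2%N 1%N * c + f 2%N 2%N * b1 + f 2%N 3%N * b2)
       (f 3%N 0%N * a + f 3%N 1%N * c + f 3%N 2%N * b1 + f 3%N 3%N * b2).
Proof.
apply/matrixP => i j; rewrite ord1 !mxE !big_ord_recl big_ord0 !mxE /=.
case: i => [[|[|[|[|k]]]] Hi] //=; rewrite ?addr0 ?addrA //.
Qed.

Lemma addv4 a c b1 b2 a' c' b1' b2' :
  vec4 a c b1 b2 + vec4 a' c' b1' b2' = vec4 (a + a') (c + c') (b1 + b1') (b2 + b2').
Proof.
apply/matrixP => i j; rewrite ord1 !mxE.
by case: i => [[|[|[|[|k]]]] Hi] //=; rewrite addr0.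
Qed.

Lemma scalev4 k a c b1 b2 : k *: vec4 a c b1 b2 = vec4 (k * a) (k * c) (k * b1) (k * b2).
Proof.
apply/matrixP => i j; rewrite ord1 !mxE.
by case: i => [[|[|[|[|k']]]] Hi] //=; rewrite mulr0.
Qed.

Lemma oppv4 a c b1 b2 : - vec4 a c b1 b2 = vec4 (- a) (- c) (- b1) (- b2).
Proof.
apply/matrixP => i j; rewrite ord1 !mxE.
by case: i => [[|[|[|[|k']]]] Hi] //=; rewrite oppr0.
Qed.

Lemma det4 f : \det (M4 f) =
 f 0%N 0%N * (f 1%N 1%N * (f 2%N 2%N * f 3%N 3%N - f 2%N 3%N * f 3%N 2%N)
  - f 1%N 2%N * (f 2%N 1%N * f 3%N 3%N - f 2%N 3%N * f 3%N 1%N)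
  + f 1%N 3%N * (f 2%N 1%N * f 3%N 2%N - f 2%N 2%N * f 3%N 1%N))
 - f 0%N 1%N * (f 1%N 0%N * (f 2%N 2%N * f 3%N 3%N - f 2%N 3%N * f 3%N 2%N)
  - f 1%N 2%N * (f 2%N 0%N * f 3%N 3%N - f 2%N 3%N * f 3%N 0%N)
  + f 1%N 3%N * (f 2%N 0%N * f 3%N 2%N - f 2%N 2%N * f 3%N 0%N))
 + f 0%N 2%N * (f 1%N 0%N * (f 2%N 1%N * f 3%N 3%N - f 2%N 3%N * f 3%N 1%N)
  - f 1%N 1%N * (f 2%N 0%N * f 3%N 3%N - f 2%N 3%N * f 3%N 0%N)
  + f 1%N 3%N * (f 2%N 0%N * f 3%N 1%N - f 2%N 1%N * f 3%N 0%N))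
 - f 0%N 3%N * (f 1%N 0%N * (f 2%N 1%N * f 3%N 2%N - f 2%N 2%N * f 3%N 1%N)
  - f 1%N 1%N * (f 2%N 0%N * f 3%N 2%N - f 2%N 2%N * f 3%N 0%N)
  + f 1%N 2%N * (f 2%N 0%N * f 3%N 1%N - f 2%N 1%N * f 3%N 0%N)).
Proof.
rewrite (expand_det_row _ 0) !big_ord_recl big_ord0 /cofactor.
rewrite !(expand_det_row _ 0) !big_ord_recl !big_ord0 /cofactor.
rewrite !(expand_det_row _ 0) !big_ord_recl !big_ord0 /cofactor !det_mx11 /=.
rewrite !mxE /= /bump /=.
rewrite !(expr0, expr1, exprS) /=.
ring.
Qed.

End G.
Section Forms.
Variable R : comNzRingType.
Variable D : int.
Local Notation tR := ((disc_t D)%:~R : R).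
Local Notation nR := ((disc_n D)%:~R : R).

Lemma Qf4 a c b1 b2 : Qf D (vec4 a c b1 b2) = a * c - (b1 ^+ 2 + tR * b1 * b2 + nR * b2 ^+ 2).
Proof. by rewrite /Qf cA4 cC4 cB14 cB24 /normb. Qed.

Lemma bil4 a c b1 b2 a' c' b1' b2' : bil D (vec4 a c b1 b2) (vec4 a' c' b1' b2') =
  a * c' + a' * c - (2 * b1 * b1' + tR * (b1 * b2' + b2 * b1') + 2 * nR * b2 * b2').
Proof. rewrite /bil addv4 !Qf4; ring. Qed.

Definition Ee (u1 u2 : R) : 'M[R]_4 := M4 (fun i j => match i, j with
 | 0%N, 0%N => 1 | 0%N, 1%N => u1 ^+ 2 + tR * u1 * u2 + nR * u2 ^+ 2
 | 0%N, 2%N => 2 * u1 + tR * u2 | 0%N, 3%N => tR * u1 + 2 * nR * u2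
 | 1%N, 1%N => 1 | 2%N, 1%N => u1 | 2%N, 2%N => 1 | 3%N, 1%N => u2 | 3%N, 3%N => 1 | _, _ => 0 end).

Definition Sm : 'M[R]_4 := M4 (fun i j => match i, j with
 | 0%N, 1%N => 1 | 1%N, 0%N => 1 | 2%N, 2%N => -1 | 2%N, 3%N => - tR | 3%N, 3%N => 1 | _, _ => 0 end).

Definition Sc (l l' : R) : 'M[R]_4 := M4 (fun i j => match i, j with
 | 0%N, 0%N => l | 1%N, 1%N => l' | 2%N, 2%N => 1 | 3%N, 3%N => 1 | _, _ => 0 end).

Lemma Ee_mul u1 u2 a c b1 b2 : Ee u1 u2 *m vec4 a c b1 b2 =
  vec4 (a + (u1 ^+ 2 + tR * u1 * u2 + nR * u2 ^+ 2) * c + (2 * u1 + tR * u2) * b1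
          + (tR * u1 + 2 * nR * u2) * b2) c (b1 + u1 * c) (b2 + u2 * c).
Proof. rewrite /Ee mulM4 /=; apply: vec4_eq; ring. Qed.

Lemma Sm_mul a c b1 b2 : Sm *m vec4 a c b1 b2 = vec4 c a (- b1 - tR * b2) b2.
Proof. rewrite /Sm mulM4 /=; apply: vec4_eq; ring. Qed.

Lemma Sc_mul l l' a c b1 b2 : Sc l l' *m vec4 a c b1 b2 = vec4 (l * a) (l' * c) b1 b2.
Proof. rewrite /Sc mulM4 /=; apply: vec4_eq; ring. Qed.

Lemma Ee_det u1 u2 : \det (Ee u1 u2) = 1.
Proof. rewrite /Ee det4 /=; ring. Qed.
Lemma Sm_det : \det Sm = 1.
Proof. rewrite /Sm det4 /=; ring. Qed.
Lemma Sc_det l l' : l * l' = 1 -> \det (Sc l l') = 1.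
Proof. move=> h; rewrite /Sc det4 /= -[RHS]h; ring. Qed.

Definition isoR (g : 'M[R]_4) := forall x, Qf D (g *m x) = Qf D x.

Lemma Ee_iso u1 u2 : isoR (Ee u1 u2).
Proof. move=> x; rewrite (vec4E x) Ee_mul !Qf4; ring. Qed.
Lemma Sm_iso : isoR Sm.
Proof. move=> x; rewrite (vec4E x) Sm_mul !Qf4; ring. Qed.
Lemma Sc_iso l l' : l * l' = 1 -> isoR (Sc l l').
Proof.
move=> h x; rewrite (vec4E x) Sc_mul !Qf4.
have -> : l * cA x * (l' * cC x) = (l * l') * (cA x * cC x) by ring.
by rewrite h mul1r.
Qed.

Lemma isoM g h : isoR g -> isoR h -> isoR (g *m h).
Proof. by move=> hg hh x; rewrite -mulmxA hg hh. Qed.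

Lemma bil_lin (x y z : 'cV[R]_4) : bil D x (y + z) = bil D x y + bil D x z.
Proof.
rewrite (vec4E x) (vec4E y) (vec4E z) addv4 !bil4; ring.
Qed.
Lemma bil_scale k (x y : 'cV[R]_4) : bil D x (k *: y) = k * bil D x y.
Proof. rewrite (vec4E x) (vec4E y) scalev4 !bil4; ring. Qed.
Lemma bil_scalel k (x y : 'cV[R]_4) : bil D (k *: x) y = k * bil D x y.
Proof. rewrite (vec4E x) (vec4E y) scalev4 !bil4; ring. Qed.
Lemma bil_iso g (x y : 'cV[R]_4) : isoR g -> bil D (g *m x) (g *m y) = bil D x y.
Proof. by move=> h; rewrite /bil -mulmxDr !h. Qed.
End Forms.
Section ZpFacts.
Variable p : nat.
Hypothesis hp : prime p.

Lemma zpmodE n : zpmod p n = (p%:Z) ^+ n.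
Proof. by rewrite /zpmod; have := prime_gt1 hp; case: p => [|[|q]]. Qed.

Lemma zseq_mul (x y : ZP p) n : zseq (x * y) n = ((zseq x n * zseq y n) %% zpmod p n)%Z.
Proof. by []. Qed.
Lemma zseq_one n : zseq (1 : ZP p) n = (1 %% zpmod p n)%Z.
Proof. by []. Qed.
Lemma zseq_zero n : zseq (0 : ZP p) n = (0 %% zpmod p n)%Z.
Proof. by []. Qed.

Lemma intr_zp (k : int) : (k%:~R : ZP p) = zp_const p k.
Proof.
have hn (m : nat) : (m%:R : ZP p) = zp_const p m.
  elim: m => [|m IH]; first by apply: zp_eq; apply: funext => n.
  rewrite -addn1 natrD IH; apply: zp_eq; apply: funext => n /=.
  by rewrite modzDm PoszD.
case: k => m; first exact: hn.
rewrite NegzE mulrNz; have -> : (Posz m.+1)%:~R = (m.+1)%:R :> ZP p by [].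
rewrite hn.
by apply: zp_eq; apply: funext => n /=; rewrite modzNm.
Qed.

Lemma zseq_int (k : int) n : zseq (k%:~R : ZP p) n = (k %% zpmod p n)%Z.
Proof. by rewrite intr_zp. Qed.

Lemma zp_dvd (w M : int) (z : ZP p) k :
  (w%:~R : ZP p) = M%:~R * z -> ((p%:Z) ^+ k %| M)%Z -> ((p%:Z) ^+ k %| w)%Z.
Proof.
move=> e hM; have := congr1 (fun x => zseq x k) e => /=.
rewrite !zseq_int zpmodE.
move/dvdz_mod0P: hM => ->; rewrite mul0r mod0z => h.
by apply/dvdz_mod0P.
Qed.

Lemma zp_inv (c : int) : ~~ (p%:Z %| c)%Z -> exists ci : ZP p, c%:~R * ci = 1.
Proof.
move=> hc.
have cop n : coprimez (p%:Z ^+ n) c.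
  apply: coprimezXl; rewrite /coprimez /gcdz /=.
  have : coprime p `|c|%N by rewrite prime_coprime //.
  by rewrite /coprime => /eqP ->.
pose u n := projT1 (Bezoutz c (p%:Z ^+ n)).
have hu n : modz (c * u n) (p%:Z ^+ n) = modz 1 (p%:Z ^+ n).
  rewrite /u; case: (Bezoutz c (p%:Z ^+ n)) => a [b] /= hab.
  have hg : gcdz c (p%:Z ^+ n) = 1 by rewrite gcdzC; apply/eqP; exact: cop n.
  rewrite hg in hab.
  have -> : c * a = (- b) * (p%:Z ^+ n) + 1 by rewrite -hab; ring.
  by rewrite modzMDl.
have hmodS (x : int) (n : nat) : modz (modz x (p%:Z ^+ n.+1)) (p%:Z ^+ n) = modz x (p%:Z ^+ n).
  by have := zpmodS_mod p x n; rewrite !zpmodE.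
have compat n : modz (u n) (p%:Z ^+ n) = modz (u n.+1) (p%:Z ^+ n).
  apply/eqP; rewrite eqz_mod_dvd -(Gauss_dvdzr _ (cop n)) mulrBr.
  rewrite -eqz_mod_dvd; apply/eqP.
  by rewrite hu -(hmodS (c * u n.+1)) hu hmodS.
have useq n : modz (u n) (zpmod p n) = modz (modz (u n.+1) (zpmod p n.+1)) (zpmod p n).
  by rewrite zpmodS_mod !zpmodE compat.
exists (MkZp _ useq); apply: zp_eq; apply: funext => n /=.
by rewrite intr_zp /= modzMm zpmodE hu.
Qed.
End ZpFacts.
Lemma numq_iota (R : comNzRingType) (r : rat) (k : int) :
  r = k%:~R -> ((numq r)%:~R : R) = k%:~R.
Proof. by move=> ->; rewrite numq_int. Qed.

Lemma ratintP (r : rat) : r \is a Num.int -> exists k : int, r = k%:~R.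
Proof. by move/intrP. Qed.

Lemma toZp4 p (v : 'cV[rat]_4) : toZp p v =
  vec4 (numq (cA v))%:~R (numq (cC v))%:~R (numq (cB1 v))%:~R (numq (cB2 v))%:~R.
Proof. by rewrite [LHS]vec4E /cA /cC /cB1 /cB2 /toZp !mxE. Qed.

Lemma eq_via (R : comNzRingType) (E L M : R) : E = 0 -> L - M = E -> L = M.
Proof. by move=> -> /eqP; rewrite subr_eq0 => /eqP. Qed.

Ltac intp := repeat first [apply: rpredB | apply: rpredD | apply: rpredM | apply: rpred_int | apply: rpred_nat | apply: rpredN | apply: rpred1 | apply: rpred0].

Lemma cAZ (R : comNzRingType) (k : R) x : cA (k *: x) = k * cA x. Proof. by rewrite /cA mxE. Qed.
Lemma cCZ (R : comNzRingType) (k : R) x : cC (k *: x) = k * cC x. Proof. by rewrite /cC mxE. Qed.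
Lemma cB1Z (R : comNzRingType) (k : R) x : cB1 (k *: x) = k * cB1 x. Proof. by rewrite /cB1 mxE. Qed.
Lemma cB2Z (R : comNzRingType) (k : R) x : cB2 (k *: x) = k * cB2 x. Proof. by rewrite /cB2 mxE. Qed.

Section Lat.
Variable D : int.
Local Notation tZ := (disc_t D).
Local Notation nZ := (disc_n D).

Lemma inL4 a c b1 b2 : inL (vec4 a c b1 b2) <->
  [/\ a \is a Num.int, c \is a Num.int, b1 \is a Num.int & b2 \is a Num.int].
Proof.
split.
  move=> h; split; [move: (h (inord 0)) | move: (h (inord 1)) | move: (h (inord 2)) | move: (h (inord 3))];
  by rewrite mxE inordK.
case=> ha hc h1 h2 i; rewrite mxE; case: i => [[|[|[|[|k]]]] Hi] //=.
Qed.

Lemma inLD x y : inL x -> inL y -> inL (x + y).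
Proof. by move=> hx hy i; rewrite mxE; apply: rpredD. Qed.
Lemma inLN x : inL x -> inL (- x).
Proof. by move=> hx i; rewrite mxE rpredN. Qed.
Lemma inLZ (k : int) x : inL x -> inL (k%:~R *: x).
Proof. by move=> hx i; rewrite mxE; apply: rpredM => //; apply: rpred_int. Qed.

Lemma bil_intE (x y : 'cV[rat]_4) : inL' D x -> inL y -> bil D x y \is a Num.int.
Proof. by move=> h; apply: h. Qed.

Lemma inL'_coords x : inL' D x ->
  [/\ cA x \is a Num.int, cC x \is a Num.int,
      - (2 * cB1 x + tZ%:~R * cB2 x) \is a Num.int &
      - (tZ%:~R * cB1 x + 2 * nZ%:~R * cB2 x) \is a Num.int].
Proof.
move=> h.
have hb (a c b1 b2 : rat) : a \is a Num.int -> c \is a Num.int -> b1 \is a Num.int ->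
   b2 \is a Num.int -> bil D x (vec4 a c b1 b2) \is a Num.int.
  by move=> *; apply: h; apply/inL4.
move: (hb 0 1 0 0) (hb 1 0 0 0) (hb 0 0 1 0) (hb 0 0 0 1).
rewrite (vec4E x) !bil4 !cA4 !cC4 !cB14 !cB24.
move=> h1 h2 h3 h4; split.
- have -> : cA x = cA x * 1 + 0 * cC x - (2 * cB1 x * 0 + tZ%:~R * (cB1 x * 0 + cB2 x * 0) + 2 * nZ%:~R * cB2 x * 0) by ring.
  by apply: h1.
- have -> : cC x = cA x * 0 + 1 * cC x - (2 * cB1 x * 0 + tZ%:~R * (cB1 x * 0 + cB2 x * 0) + 2 * nZ%:~R * cB2 x * 0) by ring.
  by apply: h2.
- have -> : - (2 * cB1 x + tZ%:~R * cB2 x) = cA x * 0 + 0 * cC x - (2 * cB1 x * 1 + tZ%:~R * (cB1 x * 0 + cB2 x * 1) + 2 * nZ%:~R * cB2 x * 0) by ring.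
  by apply: h3.
- have -> : - (tZ%:~R * cB1 x + 2 * nZ%:~R * cB2 x) = cA x * 0 + 0 * cC x - (2 * cB1 x * 0 + tZ%:~R * (cB1 x * 1 + cB2 x * 0) + 2 * nZ%:~R * cB2 x * 1) by ring.
  by apply: h4.
Qed.

Lemma inL'_of x : (forall a c b1 b2 : int, bil D x (vec4 a%:~R c%:~R b1%:~R b2%:~R) \is a Num.int) -> inL' D x.
Proof.
move=> h y hy; rewrite (vec4E y).
have [/ratintP[a ->] /ratintP[c ->] /ratintP[b1 ->] /ratintP[b2 ->]] :
  [/\ cA y \is a Num.int, cC y \is a Num.int, cB1 y \is a Num.int & cB2 y \is a Num.int].
  by apply/inL4; rewrite -vec4E.
exact: h.
Qed.

Lemma inL_L' x : inL x -> inL' D x.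
Proof.
move=> hx; apply: inL'_of => a c b1 b2.
move: hx; rewrite (vec4E x) => /inL4 [/ratintP[A ->] /ratintP[C ->] /ratintP[B1 ->] /ratintP[B2 ->]].
rewrite bil4; intp.
Qed.

End Lat.
Section Up.
Variable D : int.
Variable p : nat.
Local Notation tZ := (disc_t D).
Local Notation nZ := (disc_n D).
Local Notation tR := ((disc_t D)%:~R : ZP p).
Local Notation nR := ((disc_n D)%:~R : ZP p).

Definition disc_triv (g : 'M[ZP p]_4) := forall x, inL' D x -> forall N : nat, (0 < N)%N ->
  inL (N%:R *: x) -> exists z, g *m toZp p (N%:R *: x) - toZp p (N%:R *: x) = N%:R *: z.

Definition Up' (g : 'M[ZP p]_4) := [/\ \det g = 1, isoR D g & disc_triv g].

Lemma dataN x (N : nat) : inL' D x -> inL (N%:R *: x) ->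
  exists A C B1 B2 K1 K2 : int,
   toZp p (N%:R *: x) = vec4 (N%:Z * A)%:~R (N%:Z * C)%:~R B1%:~R B2%:~R /\
   cA x = A%:~R /\ cC x = C%:~R /\ N%:R * cB1 x = B1%:~R /\ N%:R * cB2 x = B2%:~R /\
   2 * B1 + tZ * B2 + N%:Z * K1 = 0 /\ tZ * B1 + 2 * nZ * B2 + N%:Z * K2 = 0.
Proof.
move=> /inL'_coords [/ratintP[A hA] /ratintP[C hC] /ratintP[K1 hK1] /ratintP[K2 hK2]].
move=> hNx; move: (hNx); rewrite {1}(vec4E x) scalev4 => /inL4 [_ _ /ratintP[B1 hB1] /ratintP[B2 hB2]].
exists A, C, B1, B2, K1, K2; split.
  rewrite toZp4 !cAZ !cCZ !cB1Z !cB2Z hA hC.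
  apply: vec4_eq; apply: numq_iota; by rewrite ?intrM.
do 4!(split; first done).
split; apply: (intr_inj (R := rat)); rewrite !(intrD, intrM) /= -hB1 -hB2.
  by rewrite -hK1; ring.
by rewrite -hK2; ring.
Qed.

Lemma intZ (e : int) (h : e = 0) : (e%:~R : ZP p) = 0.
Proof. by rewrite h. Qed.

Ltac castz0 h := let h' := fresh "hz" in have h' := intZ h; rewrite ?(intrD, intrM, intrN, intrB) in h'.

Lemma Ee_triv u1 u2 : disc_triv (Ee D u1 u2).
Proof.
move=> x hx N hN hNx.
move: (dataN hx hNx) => [A [C [B1 [B2 [K1 [K2 [h0 [_ [_ [_ [_ [e1 e2]]]]]]]]]]]]; rewrite h0.
castz0 e1; castz0 e2.
exists (vec4 ((u1 ^+ 2 + tR * u1 * u2 + nR * u2 ^+ 2) * C%:~R - u1 * K1%:~R - u2 * K2%:~R) 0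
  (u1 * C%:~R) (u2 * C%:~R)).
rewrite Ee_mul oppv4 addv4 scalev4; apply: vec4_eq; rewrite ?intrM.
- apply: (eq_via (E := u1 * (2%:~R * B1%:~R + tR * B2%:~R + (N%:Z)%:~R * K1%:~R)
                     + u2 * (tR * B1%:~R + 2%:~R * nR * B2%:~R + (N%:Z)%:~R * K2%:~R))).
    by rewrite hz hz0 !mulr0 addr0.
  rewrite (_ : (N%:Z)%:~R = N%:R :> ZP p) //; ring.
- ring.
- rewrite (_ : (N%:Z)%:~R = N%:R :> ZP p) //; ring.
- rewrite (_ : (N%:Z)%:~R = N%:R :> ZP p) //; ring.
Qed.

End Up.
Section Up2.
Variable D : int.
Variable p : nat.
Local Notation tZ := (disc_t D).
Local Notation nZ := (disc_n D).
Local Notation tR := ((disc_t D)%:~R : ZP p).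
Local Notation nR := ((disc_n D)%:~R : ZP p).

Ltac castz1 h := let h' := fresh "hz" in have h' := intZ p h; rewrite ?(intrD, intrM, intrN, intrB) in h'.

Lemma Sm_triv : disc_triv D (@Sm (ZP p) D).
Proof.
move=> x hx N hN hNx.
move: (dataN p hx hNx) => [A [C [B1 [B2 [K1 [K2 [h0 [_ [_ [_ [_ [e1 e2]]]]]]]]]]]]; rewrite h0.
castz1 e1.
exists (vec4 (C%:~R - A%:~R) (A%:~R - C%:~R) K1%:~R 0).
rewrite Sm_mul oppv4 addv4 scalev4; apply: vec4_eq; rewrite ?intrM.
- rewrite (_ : (N%:Z)%:~R = N%:R :> ZP p) //; ring.
- rewrite (_ : (N%:Z)%:~R = N%:R :> ZP p) //; ring.
- apply: (eq_via (E := - (2%:~R * B1%:~R + tR * B2%:~R + (N%:Z)%:~R * K1%:~R))).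
    by rewrite hz oppr0.
  rewrite (_ : (N%:Z)%:~R = N%:R :> ZP p) //; rewrite (_ : 2%:~R = 2 :> ZP p) //; ring.
- ring.
Qed.

Lemma Sc_triv l l' : disc_triv D (@Sc (ZP p) l l').
Proof.
move=> x hx N hN hNx.
move: (dataN p hx hNx) => [A [C [B1 [B2 [K1 [K2 [h0 [_ [_ [_ [_ [e1 e2]]]]]]]]]]]]; rewrite h0.
exists (vec4 ((l - 1) * A%:~R) ((l' - 1) * C%:~R) 0 0).
rewrite Sc_mul oppv4 addv4 scalev4; apply: vec4_eq; rewrite ?intrM.
- rewrite (_ : (N%:Z)%:~R = N%:R :> ZP p) //; ring.
- rewrite (_ : (N%:Z)%:~R = N%:R :> ZP p) //; ring.
- ring.
- ring.
Qed.

Lemma UpM (g h : 'M[ZP p]_4) : Up' D g -> Up' D h -> Up' D (g *m h).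
Proof.
case=> dg ig tg [dh ih th]; split.
- by rewrite det_mulmx dg dh mulr1.
- exact: isoM.
move=> x hx N hN hNx.
have [z1 hz1] := tg x hx N hN hNx.
have [z2 hz2] := th x hx N hN hNx.
exists (g *m z2 + z1).
rewrite scalerDr scalemxAr -hz2 mulmxBr -hz1 mulmxA.
by rewrite addrA subrK.
Qed.

End Up2.

Section Up3.
Variable D : int.
Variable p : nat.

Lemma Up_adj (g : 'M[ZP p]_4) : Up' D g -> Up' D (\adj g) /\ \adj g *m g = 1%:M.
Proof.
case=> dg ig tg.
have h1 : \adj g *m g = 1%:M by rewrite mul_adj_mx dg.
have h2 : g *m \adj g = 1%:M by rewrite mul_mx_adj dg.
split; last exact h1; split.
- have := det_mulmx g (\adj g); rewrite h2 det1 dg mul1r; by move=> <-.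
- by move=> x; rewrite -(ig (\adj g *m x)) mulmxA h2 mul1mx.
move=> x hx N hN hNx.
have [z hz] := tg x hx N hN hNx.
exists (- (\adj g *m z)).
rewrite scalerN scalemxAr -hz mulmxBr mulmxA h1 mul1mx.
by rewrite opprB.
Qed.
End Up3.


Lemma mul_den_int (r : rat) (k : int) : ((k * denq r)%:~R * r : rat) \is a Num.int.
Proof. by rewrite intrM -mulrA [_ * r]mulrC -numqE; intp. Qed.

Lemma exN (x : 'cV[rat]_4) : exists N : nat, (0 < N)%N /\ inL (N%:R *: x).
Proof.
pose a := cA x; pose c := cC x; pose b1 := cB1 x; pose b2 := cB2 x.
pose P : int := denq a * denq c * denq b1 * denq b2.
have Ppos : 0 < P by rewrite !mulr_gt0 ?denq_gt0.
exists `|P|%N; split; first by rewrite absz_gt0 gt_eqF.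
have -> : (`|P|%N%:R : rat) = P%:~R.
  by rewrite -[in RHS](gez0_abs (ltW Ppos)).
rewrite (vec4E x) scalev4; apply/inL4; split.
- by rewrite (_ : P = (denq c * denq b1 * denq b2) * denq a); [apply: mul_den_int | rewrite /P; ring].
- by rewrite (_ : P = (denq a * denq b1 * denq b2) * denq c); [apply: mul_den_int | rewrite /P; ring].
- by rewrite (_ : P = (denq a * denq c * denq b2) * denq b1); [apply: mul_den_int | rewrite /P; ring].
- by rewrite (_ : P = (denq a * denq c * denq b1) * denq b2); [apply: mul_den_int | rewrite /P; ring].
Qed.

Section Up4.
Variable D : int.
Variable p : nat.

Lemma Up_in (g : 'M[ZP p]_4) : Up' D g -> in_Up D g.
Proof.
case=> dg ig tg; split => // x hx.
have [N [hN hNx]] := exN x.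
exists N; split => //; exact: tg.
Qed.

Lemma Up_Ee (u1 u2 : ZP p) : Up' D (Ee D u1 u2).
Proof. split; [exact: Ee_det | exact: Ee_iso | exact: Ee_triv]. Qed.
Lemma Up_Sm : Up' D (@Sm (ZP p) D).
Proof. split; [exact: Sm_det | exact: Sm_iso | exact: Sm_triv]. Qed.
Lemma Up_Sc (l l' : ZP p) : l * l' = 1 -> Up' D (Sc l l').
Proof. move=> h; split; [exact: Sc_det | exact: Sc_iso | exact: Sc_triv]. Qed.
End Up4.


Lemma inL_coordB (X Y : 'cV[rat]_4) : inL (X - Y) ->
  exists a c b1 b2 : int, [/\ cA X - cA Y = a%:~R, cC X - cC Y = c%:~R,
     cB1 X - cB1 Y = b1%:~R & cB2 X - cB2 Y = b2%:~R].
Proof.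
rewrite (vec4E X) (vec4E Y) oppv4 addv4 => /inL4[].
move=> /ratintP[a ha] /ratintP[c hc] /ratintP[b1 hb1] /ratintP[b2 hb2].
by exists a, c, b1, b2; rewrite !cA4 !cC4 !cB14 !cB24.
Qed.

Section Red.
Variable D : int.
Variable p : nat.
Hypothesis hp : prime p.
Variable X0 : 'cV[rat]_4.
Variable N : nat.
Hypothesis hN : (0 < N)%N.
Hypothesis hNX0 : inL (N%:R *: X0).
Hypothesis hX0 : inL' D X0.
Local Notation tZ := (disc_t D).
Local Notation nZ := (disc_n D).
Local Notation tR := ((disc_t D)%:~R : ZP p).
Local Notation nR := ((disc_n D)%:~R : ZP p).

Ltac castz9 h := let h' := fresh "hz" in have h' := intZ p h; rewrite ?(intrD, intrM, intrN, intrB) in h'.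

Definition Y0 := vec4 (cA X0 * cC X0) 1 (cB1 X0) (cB2 X0).
Definition Good X := [/\ inL' D X, inL (X - X0) & Qf D X = Qf D X0].
Definition T X := exists G, Up' D G /\ G *m toZp p (N%:R *: X) = toZp p (N%:R *: Y0).

Lemma Good_NX X : Good X -> inL (N%:R *: X).
Proof.
case=> _ h _; have -> : N%:R *: X = N%:R *: X0 + (N%:Z)%:~R *: (X - X0).
  by rewrite scalerDr scalerN addrC subrK.
by apply: inLD => //; apply: inLZ.
Qed.

Lemma NZ : (N%:Z)%:~R = N%:R :> ZP p. Proof. by []. Qed.

Lemma toZpY : exists A0 C0 B01 B02 : int,
  [/\ cA X0 = A0%:~R, cC X0 = C0%:~R, N%:R * cB1 X0 = B01%:~R, N%:R * cB2 X0 = B02%:~R &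
  toZp p (N%:R *: Y0) = vec4 (N%:Z * (A0 * C0))%:~R (N%:Z)%:~R B01%:~R B02%:~R].
Proof.
move: (dataN p hX0 hNX0) => [A0 [C0 [B01 [B02 [K01 [K02 [_ [hA0 [hC0 [hB01 [hB02 _]]]]]]]]]]].
exists A0, C0, B01, B02; split => //.
rewrite toZp4 !cAZ !cCZ !cB1Z !cB2Z /Y0 !cA4 !cC4 !cB14 !cB24; apply: vec4_eq; apply: numq_iota.
- by rewrite hA0 hC0 !intrM.
- by rewrite mulr1.
- by [].
- by [].
Qed.

Lemma case1 X (C : int) : Good X -> cC X = C%:~R -> ~~ (p%:Z %| C)%Z -> T X.
Proof.
move=> hG hC hpC; have hNX := Good_NX hG; case: hG => hX hXX0 hQ.
move: (dataN p hX hNX) => [A [C' [B1 [B2 [K1 [K2 [h0 [hA [hC' [hB1 [hB2 _]]]]]]]]]]].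
have eC : C' = C by apply: (intr_inj (R:=rat)); rewrite -hC' hC.
subst C'.
have [A0 [C0 [B01 [B02 [hA0 hC0 hB01 hB02 hY]]]]] := toZpY.
have [e1 [e2 [e3 [e4 [_ _ he3 he4]]]]] := inL_coordB hXX0.
have [ci hci] := zp_inv hp hpC.
set d1 := - e3; set d2 := - e4.
exists (Sc C%:~R ci *m Ee D (ci * d1%:~R) (ci * d2%:~R)); split.
  by apply: UpM; [exact: Up_Sc | exact: Up_Ee].
have rb1 : B1 + N%:Z * d1 - B01 = 0.
  apply: (intr_inj (R:=rat)); rewrite !(intrD, intrM, intrN, intrB) -hB1 -hB01 -he3 /=; ring.
have rb2 : B2 + N%:Z * d2 - B02 = 0.
  apply: (intr_inj (R:=rat)); rewrite !(intrD, intrM, intrN, intrB) -hB2 -hB02 -he4 /=; ring.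
have ra : C * (N%:Z * A) + N%:Z * (d1 ^+ 2 + tZ * d1 * d2 + nZ * d2 ^+ 2) + B1 * (2 * d1 + tZ * d2)
   + B2 * (tZ * d1 + 2 * nZ * d2) - N%:Z * (A0 * C0) = 0.
  apply: (intr_inj (R:=rat)); rewrite !(intrD, intrM, intrN, intrB, rmorphXn) -hB1 -hB2 -he3 -he4 -hA -hC -hA0 -hC0 /=.
  rewrite /Qf /normb in hQ; rewrite (_ : (N%:Z)%:~R = N%:R :> rat) //.
  apply: (eq_via (E := N%:R * ((cA X * cC X - (cB1 X ^+ 2 + tZ%:~R * cB1 X * cB2 X + nZ%:~R * cB2 X ^+ 2)) -
    (cA X0 * cC X0 - (cB1 X0 ^+ 2 + tZ%:~R * cB1 X0 * cB2 X0 + nZ%:~R * cB2 X0 ^+ 2))))).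
    by rewrite hQ subrr mulr0.
  rewrite /d1 /d2 ?intrN -?he3 -?he4; ring.
castz9 ra; castz9 rb1; castz9 rb2.
rewrite h0 hY -mulmxA Ee_mul Sc_mul; apply: vec4_eq; rewrite ?intrM NZ.
- apply: (eq_via (E := (C%:~R * ci - 1) * ((C%:~R * ci + 1) * N%:R * (d1%:~R ^+ 2 + tR * d1%:~R * d2%:~R + nR * d2%:~R ^+ 2)
     + B1%:~R * (2 * d1%:~R + tR * d2%:~R) + B2%:~R * (tR * d1%:~R + 2 * nR * d2%:~R)) +
    (C%:~R * (N%:R * A%:~R) + N%:R * (d1%:~R ^+ 2 + tR * d1%:~R * d2%:~R + nR * d2%:~R ^+ 2) +
    B1%:~R * (2%:~R * d1%:~R + tR * d2%:~R) + B2%:~R * (tR * d1%:~R + 2%:~R * nR * d2%:~R) -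
    N%:R * (A0%:~R * C0%:~R)))).
    rewrite hci subrr mul0r add0r -hz /d1 /d2 ?intrN; ring.
  ring.
- apply: (eq_via (E := N%:R * (C%:~R * ci - 1))); first by rewrite hci subrr mulr0.
  ring.
- apply: (eq_via (E := N%:R * d1%:~R * (C%:~R * ci - 1) + (B1%:~R + N%:R * d1%:~R - B01%:~R))).
    rewrite hci subrr mulr0 add0r -hz0 /d1 /d2 ?intrN; ring.
  ring.
- apply: (eq_via (E := N%:R * d2%:~R * (C%:~R * ci - 1) + (B2%:~R + N%:R * d2%:~R - B02%:~R))).
    rewrite hci subrr mulr0 add0r -hz1 /d1 /d2 ?intrN; ring.
  ring.
Qed.
End Red.


Lemma bil_sym D (R : comNzRingType) (x y : 'cV[R]_4) : bil D x y = bil D y x.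
Proof. rewrite (vec4E x) (vec4E y) !bil4; ring. Qed.

Lemma inL'D D x y : inL' D x -> inL' D y -> inL' D (x + y).
Proof.
move=> hx hy z hz; rewrite bil_sym bil_lin bil_sym [bil D z y]bil_sym.
by apply: rpredD; [apply: hx | apply: hy].
Qed.

Lemma inL'_shift D x y : inL' D x -> inL (y - x) -> inL' D y.
Proof. by move=> hx hyx; rewrite -(subrK x y); apply: inL'D => //; apply: inL_L'. Qed.

Lemma inL_shift x y z : inL (x - y) -> inL (y - z) -> inL (x - z).
Proof. by move=> h1 h2; rewrite -(subrK y x) -addrA; apply: inLD. Qed.

Section Red2.
Variable D : int.
Variable p : nat.
Hypothesis hp : prime p.
Variable X0 : 'cV[rat]_4.
Variable N : nat.
Hypothesis hN : (0 < N)%N.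
Hypothesis hNX0 : inL (N%:R *: X0).
Hypothesis hX0 : inL' D X0.
Local Notation tZ := (disc_t D).
Local Notation nZ := (disc_n D).
Local Notation tR := ((disc_t D)%:~R : ZP p).
Local Notation nR := ((disc_n D)%:~R : ZP p).
Local Notation T := (T D p X0 N).
Local Notation Good := (Good D X0).

Lemma case2 X (A : int) : Good X -> cA X = A%:~R -> ~~ (p%:Z %| A)%Z -> T X.
Proof.
move=> hG hA hpA; have hNX := Good_NX hNX0 hG; case: hG => hX hXX0 hQ.
have [/ratintP[A' hA'] /ratintP[C hC] /ratintP[K1 hK1] /ratintP[K2 hK2]] := inL'_coords hX.
pose X' := vec4 (cC X) (cA X) (- cB1 X - tZ%:~R * cB2 X) (cB2 X).
have hX'X : inL (X' - X).
  rewrite {1}(vec4E X) /X' oppv4 addv4; apply/inL4; split.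
  - by rewrite hC hA'; intp.
  - by rewrite hC hA'; intp.
  - have -> : - cB1 X - tZ%:~R * cB2 X + - cB1 X = - (2 * cB1 X + tZ%:~R * cB2 X) by ring.
    by rewrite hK1; intp.
  - by rewrite subrr; intp.
have hG' : Good X'.
  split.
  - exact: inL'_shift hX hX'X.
  - exact: inL_shift hX'X hXX0.
  - by rewrite -hQ /X' Qf4 [in RHS](vec4E X) Qf4; ring.
have hcX' : cC X' = A%:~R by rewrite /X' cC4.
have [G1 [hG1 e1]] := case1 hp hNX0 hX0 hG' hcX' hpA.
exists (G1 *m @Sm (ZP p) D); split; first by apply: UpM => //; exact: Up_Sm.
rewrite -mulmxA -e1; congr (_ *m _).
move: (dataN p hX hNX) => [A1 [C1 [B1 [B2 [_ [_ [h0 [hA1 [hC1 [hB1 [hB2 _]]]]]]]]]]].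
rewrite h0 Sm_mul toZp4 /X' !cAZ !cCZ !cB1Z !cB2Z !cA4 !cC4 !cB14 !cB24 hA1 hC1.
apply: vec4_eq.
- by apply/esym/numq_iota; rewrite intrM.
- by apply/esym/numq_iota; rewrite intrM.
- rewrite (@numq_iota _ _ (- B1 - tZ * B2)); first by rewrite intrB intrN intrM.
  by rewrite intrB intrN intrM -hB1 -hB2; ring.
- by apply/esym/numq_iota.
Qed.

End Red2.


Section Red3.
Variable D : int.
Variable p : nat.
Hypothesis hp : prime p.
Variable X0 : 'cV[rat]_4.
Variable N : nat.
Hypothesis hN : (0 < N)%N.
Hypothesis hNX0 : inL (N%:R *: X0).
Hypothesis hX0 : inL' D X0.
Local Notation tZ := (disc_t D).
Local Notation nZ := (disc_n D).
Local Notation T := (T D p X0 N).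
Local Notation Good := (Good D X0).

Lemma red X : Good X -> ~ inL' D ((p%:R)^-1 *: X) -> T X.
Proof.
move=> hG hprim; have hNX := Good_NX hNX0 hG; have [hX hXX0 hQ] := hG.
have [/ratintP[A hA] /ratintP[C hC] /ratintP[K1 hK1] /ratintP[K2 hK2]] := inL'_coords hX.
case: (boolP (p%:Z %| C)%Z) => hpC; last by apply: (case1 hp hNX0 hX0 hG hC).
case: (boolP (p%:Z %| A)%Z) => hpA; last by apply: (case2 hp hNX0 hX0 hG hA).
move/existsNP: hprim => [y /not_implyP [hy hny]].
have := hy; rewrite (vec4E y) => /inL4 [/ratintP[ya hya] /ratintP[yc hyc] /ratintP[y1 hy1] /ratintP[y2 hy2]].
have [k hk] : exists k : int, bil D X y = k%:~R by apply/ratintP; apply: hX.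
have hpk : ~~ (p%:Z %| k)%Z.
  apply/negP => /dvdzP [q hq]; apply: hny.
  have hp0 : (p%:R : rat) != 0 by rewrite pnatr_eq0 -lt0n prime_gt0.
  rewrite bil_scalel hk hq intrM (_ : (p%:Z)%:~R = p%:R :> rat) // mulrCA mulVf // mulr1; intp.
have ek : k = A * yc + ya * C + y1 * K1 + y2 * K2.
  apply: (intr_inj (R:=rat)); rewrite -hk !(intrD, intrM) -hA -hC -hK1 -hK2 -hya -hyc -hy1 -hy2.
  rewrite (vec4E X) (vec4E y) bil4 !cA4 !cC4 !cB14 !cB24; ring.
pose A' : int := A + (y1 ^+ 2 + tZ * y1 * y2 + nZ * y2 ^+ 2) * C - y1 * K1 - y2 * K2.
pose X' := vec4 (cA X + (y1%:~R ^+ 2 + tZ%:~R * y1%:~R * y2%:~R + nZ%:~R * y2%:~R ^+ 2) * cC X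
   + (2 * y1%:~R + tZ%:~R * y2%:~R) * cB1 X + (tZ%:~R * y1%:~R + 2 * nZ%:~R * y2%:~R) * cB2 X)
   (cC X) (cB1 X + y1%:~R * cC X) (cB2 X + y2%:~R * cC X).
have hA' : cA X' = A'%:~R.
  rewrite /X' cA4 /A' !(intrD, intrM, intrB, intrN, rmorphXn) -hA -hC -hK1 -hK2; ring.
have hpA' : ~~ (p%:Z %| A')%Z.
  apply: contra hpk => h.
  have -> : k = - A' + A * (1 + yc) + C * ((y1 ^+ 2 + tZ * y1 * y2 + nZ * y2 ^+ 2) + ya).
    by rewrite ek /A'; ring.
  by rewrite rpredD // ?rpredD ?rpredN // ?dvdz_mulr.
have hX'X : inL (X' - X).
  rewrite {1}(vec4E X) /X' oppv4 addv4; apply/inL4; split.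
  - have -> : cA X + (y1%:~R ^+ 2 + tZ%:~R * y1%:~R * y2%:~R + nZ%:~R * y2%:~R ^+ 2) * cC X
     + (2 * y1%:~R + tZ%:~R * y2%:~R) * cB1 X + (tZ%:~R * y1%:~R + 2 * nZ%:~R * y2%:~R) * cB2 X + - cA X
     = (y1%:~R ^+ 2 + tZ%:~R * y1%:~R * y2%:~R + nZ%:~R * y2%:~R ^+ 2) * cC X - y1%:~R * K1%:~R - y2%:~R * K2%:~R.
      by rewrite -hK1 -hK2; ring.
    rewrite hC; intp.
  - by rewrite subrr.
  - by rewrite addrC addKr hC; intp.
  - by rewrite addrC addKr hC; intp.
have hG' : Good X'.
  split.
  - exact: inL'_shift hX hX'X.
  - exact: inL_shift hX'X hXX0.
  - by rewrite -hQ /X' Qf4 [in RHS](vec4E X) Qf4; ring.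
have [G2 [hG2 e2]] := case2 hp hNX0 hX0 hG' hA' hpA'.
exists (G2 *m Ee D (y1%:~R) (y2%:~R)); split; first by apply: UpM => //; exact: Up_Ee.
rewrite -mulmxA -e2; congr (_ *m _).
move: (dataN p hX hNX) => [A1 [C1 [B1 [B2 [_ [_ [h0 [hA1 [hC1 [hB1 [hB2 _]]]]]]]]]]].
have eA : A1 = A by apply: (intr_inj (R:=rat)); rewrite -hA1 hA.
have eC : C1 = C by apply: (intr_inj (R:=rat)); rewrite -hC1 hC.
subst A1 C1.
rewrite h0 Ee_mul toZp4 !cAZ !cCZ !cB1Z !cB2Z /X' !cA4 !cC4 !cB14 !cB24.
apply: vec4_eq.
- rewrite (@numq_iota _ _ (N%:Z * A + (y1 ^+ 2 + tZ * y1 * y2 + nZ * y2 ^+ 2) * (N%:Z * C)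
     + (2 * y1 + tZ * y2) * B1 + (tZ * y1 + 2 * nZ * y2) * B2)).
    by rewrite !(intrD, intrM, rmorphXn).
  rewrite !(intrD, intrM, rmorphXn) -hA -hC -hB1 -hB2 (_ : (N%:Z)%:~R = N%:R :> rat) //; ring.
- by apply/esym/numq_iota; rewrite hC intrM.
- rewrite (@numq_iota _ _ (B1 + y1 * (N%:Z * C))); first by rewrite !(intrD, intrM).
  rewrite !(intrD, intrM) -hC -hB1 (_ : (N%:Z)%:~R = N%:R :> rat) //; ring.
- rewrite (@numq_iota _ _ (B2 + y2 * (N%:Z * C))); first by rewrite !(intrD, intrM).
  rewrite !(intrD, intrM) -hC -hB2 (_ : (N%:Z)%:~R = N%:R :> rat) //; ring.
Qed.
End Red3.

Section ZpMore.
Variable p : nat.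
Hypothesis hp : prime p.

Lemma zp_ptf (y : ZP p) : (p%:R : ZP p) * y = 0 -> y = 0.
Proof.
move=> h; apply: zp_eq; apply: funext => n /=.
have := congr1 (fun x => zseq x n.+1) h => /=.
have e : zseq (p%:R : ZP p) n.+1 = modz p (zpmod p n.+1) by exact: (zseq_int p (p%:Z)).
rewrite e modzMml mod0z (zpmodE hp) => /dvdz_mod0P.
rewrite exprS dvdz_mul2l; last by rewrite eqz_nat -lt0n prime_gt0.
move=> /dvdz_mod0P h1.
by rewrite (zseqP y n) (zpmodE hp) h1 mod0z.
Qed.

Lemma zp_tf (m : nat) (y : ZP p) : (0 < m)%N -> (m%:R : ZP p) * y = 0 -> y = 0.
Proof.
elim/ltn_ind: m y => m IH y hm.
case: (ltngtP m 1) => [|hm1|->]; first by rewrite ltnS leqn0 => /eqP e; rewrite e in hm.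
  have hq := pdiv_prime hm1.
  have hqm := pdiv_dvd m.
  rewrite -(divnK hqm) natrM -mulrA => h.
  have hm2 : (0 < m %/ pdiv m)%N by rewrite divn_gt0 ?pdiv_gt0 // dvdn_leq.
  have hlt : (m %/ pdiv m < m)%N by rewrite ltn_Pdiv // ?prime_gt1 // ltnW.
  have h' : (pdiv m)%:R * y = 0 by apply: (IH _ hlt _ hm2).
  case: (eqVneq (pdiv m) p) => [e|ne].
    by apply: zp_ptf; move: h'; rewrite e.
  have hnd : ~~ (p%:Z %| (pdiv m)%:Z)%Z.
    by rewrite dvdzE /= dvdn_prime2 // eq_sym.
  have [ci hci] := zp_inv hp hnd.
  by rewrite -[y]mul1r -hci mulrC mulrA [y * _]mulrC; rewrite (_ : (Posz (pdiv m))%:~R = (pdiv m)%:R :> ZP p) // h' mul0r.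
by rewrite mul1r.
Qed.
End ZpMore.


Section Back.
Variable D : int.
Variable p : nat.
Hypothesis hp : prime p.

Lemma inL_int4 v : inL v -> exists a c b1 b2 : int, v = vec4 a%:~R c%:~R b1%:~R b2%:~R.
Proof.
rewrite (vec4E v) => /inL4 [/ratintP[a ->] /ratintP[c ->] /ratintP[b1 ->] /ratintP[b2 ->]].
by exists a, c, b1, b2.
Qed.

Lemma toZp_int4 (a c b1 b2 : int) :
  toZp p (vec4 a%:~R c%:~R b1%:~R b2%:~R) = vec4 a%:~R c%:~R b1%:~R b2%:~R.
Proof. by rewrite toZp4 !cA4 !cC4 !cB14 !cB24 !numq_int. Qed.

Lemma Qf_toZp v : inL v -> Qf D v \is a Num.int /\ Qf D (toZp p v) = (numq (Qf D v))%:~R.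
Proof.
move=> /inL_int4 [a [c [b1 [b2 ->]]]]; rewrite toZp_int4 !Qf4.
set e : int := a * c - (b1 ^+ 2 + disc_t D * b1 * b2 + disc_n D * b2 ^+ 2).
have E : a%:~R * c%:~R - (b1%:~R ^+ 2 + (disc_t D)%:~R * b1%:~R * b2%:~R + (disc_n D)%:~R * b2%:~R ^+ 2)
   = e%:~R :> rat by rewrite /e !(intrD, intrM, intrB, intrN); ring.
rewrite E numq_int; split; first by intp.
rewrite /e !(intrD, intrM, intrB, intrN); ring.
Qed.

Lemma bil_toZp u v : inL u -> inL v -> bil D u v \is a Num.int /\
  bil D (toZp p u) (toZp p v) = (numq (bil D u v))%:~R.
Proof.
move=> /inL_int4 [a [c [b1 [b2 ->]]]] /inL_int4 [a' [c' [b1' [b2' ->]]]].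
rewrite !toZp_int4 !bil4.
set e : int := a * c' + a' * c - (2 * b1 * b1' + disc_t D * (b1 * b2' + b2 * b1') + 2 * disc_n D * b2 * b2').
have E : a%:~R * c'%:~R + a'%:~R * c%:~R - (2 * b1%:~R * b1'%:~R + (disc_t D)%:~R * (b1%:~R * b2'%:~R + b2%:~R * b1'%:~R)
    + 2 * (disc_n D)%:~R * b2%:~R * b2'%:~R) = e%:~R :> rat by rewrite /e !(intrD, intrM, intrB, intrN); ring.
rewrite E numq_int; split; first by intp.
rewrite /e !(intrD, intrM, intrB, intrN); ring.
Qed.

Lemma toZp_scale (k : nat) v : inL v -> toZp p (k%:R *: v) = k%:R *: toZp p v.
Proof.
move=> /inL_int4 [a [c [b1 [b2 ->]]]].
rewrite scalev4 toZp_int4 scalev4; rewrite -!(intrM _ k%:Z) toZp_int4.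
by rewrite !(intrM _ k%:Z).
Qed.

Lemma zp_int_inj (a b : int) : (a%:~R : ZP p) = b%:~R -> a = b.
Proof.
move=> e; apply/eqP; rewrite -subr_eq0; apply/negPn/negP => hne.
have e0 : ((a - b)%:~R : ZP p) = 0 by rewrite intrB e subrr.
have : ((`|a - b|%N)%:R : ZP p) * 1 = 0.
  rewrite mulr1; move: e0; case: (a - b) hne => m hm.
    by [].
  by rewrite NegzE intrN => /eqP; rewrite oppr_eq0 => /eqP.
have hm : (0 < `|a - b|)%N by rewrite absz_gt0.
by move=> h; have := zp_tf hp hm h => /eqP; rewrite oner_eq0.
Qed.

End Back.


Lemma padic_int (δ : rat) : (forall q, prime q -> exists (M : nat) (w : int) (z : ZP q),
   [/\ (0 < M)%N, M%:R * δ = w%:~R & (w%:~R : ZP q) = M%:R * z]) -> δ \is a Num.int.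
Proof.
move=> h; rewrite Qint_def; apply/negPn/negP => hd.
have dpos := denq_gt0 δ.
have d1 : (1 < `|denq δ|)%N.
  move: hd; rewrite -[denq δ]gez0_abs ?ltW //.
  have : (0 < `|denq δ|)%N by rewrite absz_gt0 gt_eqF.
  by case: `|denq δ|%N => [|[|k]].
have hq := pdiv_prime d1; set q := pdiv _ in hq.
have hqd : (q %| `|denq δ|)%N := pdiv_dvd _.
have [M [w [z [hM hw hz]]]] := h q hq.
have e : w * denq δ = M%:Z * numq δ.
  apply: (intr_inj (R:=rat)); rewrite !intrM -hw numqE; rewrite (_ : (M%:Z)%:~R = M%:R :> rat) //; ring.
have e2 : (M%:R : ZP q) * (z * (denq δ)%:~R - (numq δ)%:~R) = 0.
  rewrite mulrBr mulrA -hz -!intrM e intrM; rewrite (_ : (M%:Z)%:~R = M%:R :> ZP q) //; ring.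
have := zp_tf hq hM e2 => /eqP; rewrite subr_eq0 mulrC => /eqP /esym e3.
have := @zp_dvd q hq _ _ _ 1 e3; rewrite expr1 !dvdzE /= => /(_ hqd) hqn.
have := coprime_num_den δ; rewrite /coprime => /eqP hg.
have : (q %| gcdn `|numq δ| `|denq δ|)%N by rewrite dvdn_gcd hqn hqd.
by rewrite hg dvdn1 => /eqP hq1; move: (prime_gt1 hq); rewrite hq1.
Qed.

Lemma L'_mult D p x (M : nat) (w : 'cV[ZP p]_4) : inL' D x -> inL (M%:R *: x) ->
  exists s, bil D (toZp p (M%:R *: x)) w = M%:R * s.
Proof.
move=> hx hMx.
move: (dataN p hx hMx) => [A [C [B1 [B2 [K1 [K2 [h0 [_ [_ [_ [_ [e1 e2]]]]]]]]]]]].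
have z1 := intZ p e1; have z2 := intZ p e2.
rewrite ?(intrD, intrM) in z1 z2.
exists (A%:~R * cC w + cA w * C%:~R + cB1 w * K1%:~R + cB2 w * K2%:~R).
rewrite h0 [w]vec4E bil4 !cA4 !cC4 !cB14 !cB24 !intrM.
apply: (eq_via (E := - (cB1 w * ((1 + 1) * B1%:~R + (disc_t D)%:~R * B2%:~R + (M%:Z)%:~R * K1%:~R)
   + cB2 w * ((disc_t D)%:~R * B1%:~R + (1 + 1) * (disc_n D)%:~R * B2%:~R + (M%:Z)%:~R * K2%:~R)))).
  by rewrite z1 z2 !mulr0 addr0 oppr0.
rewrite (_ : (M%:Z)%:~R = M%:R :> ZP p) //; ring.
Qed.


Lemma inL0 : inL (0 : 'cV[rat]_4).
Proof. by move=> i; rewrite mxE rpred0. Qed.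

Lemma forward D mu m X0 X : inL' D mu -> L0 D m mu X0 -> L0 D m mu X -> in_UX0 D X0 X.
Proof.
move=> hmu [hL0 hQ0 hP0] [hL hQ hP] q hq.
have hX0 : inL' D X0 := inL'_shift hmu hL0.
have hX : inL' D X := inL'_shift hmu hL.
have hXX0 : inL (X - X0).
  apply: (inL_shift hL); rewrite -opprB; exact: inLN.
have [N [hN hNX0]] := exN X0.
have gX0 : Good D X0 X0 by split => //; rewrite subrr; exact: inL0.
have gX : Good D X0 X by split => //; rewrite hQ hQ0.
have [G0 [hG0 e0]] := red hq hNX0 hX0 gX0 (hP0 q (prime_gt1 hq)).
have [GX [hGX eX]] := red hq hNX0 hX0 gX (hP q (prime_gt1 hq)).
have [hadj hinv] := Up_adj hGX.
exists (\adj GX *m G0); split; first by apply: Up_in; apply: UpM.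
have hNX := Good_NX hNX0 gX.
exists N; split; [exact: hN | exact: hNX0 | exact: hNX | ].
by rewrite -mulmxA e0 -eX mulmxA hinv mul1mx.
Qed.


Lemma scale_nat_comm (k l : nat) (v : 'cV[rat]_4) : (k * l)%N%:R *: v = l%:R *: (k%:R *: v).
Proof. by rewrite natrM mulrC scalerA. Qed.

Lemma back_L D mu m X0 X : inL' D mu -> L0 D m mu X0 -> in_UX0 D X0 X -> inL (X - X0).
Proof.
move=> hmu [hL0 hQ0 hP0] hU.
have hX0 : inL' D X0 := inL'_shift hmu hL0.
move=> i; apply: padic_int => q hq.
have [g [[dg ig tg] [N [hN hNX0 hNX hg]]]] := hU q hq.
have [N' [hN' hN'X0 [z hz]]] := tg X0 hX0.
pose M := (N * N')%N.
have hMX : inL (M%:R *: X) by rewrite /M scale_nat_comm (_ : N'%:R = (N'%:Z)%:~R) //; apply: inLZ.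
have hMX0 : inL (M%:R *: X0) by rewrite /M scale_nat_comm (_ : N'%:R = (N'%:Z)%:~R) //; apply: inLZ.
have E : toZp q (M%:R *: X) - toZp q (M%:R *: X0) = M%:R *: z.
  have h1 : toZp q (M%:R *: X) = N'%:R *: (g *m toZp q (N%:R *: X0)).
    by rewrite /M scale_nat_comm (toZp_scale q _ hNX) hg.
  have h2 : toZp q (M%:R *: X0) = N'%:R *: toZp q (N%:R *: X0).
    by rewrite /M scale_nat_comm (toZp_scale q _ hNX0).
  have h3 : toZp q (M%:R *: X0) = N%:R *: toZp q (N'%:R *: X0).
    by rewrite /M mulnC scale_nat_comm (toZp_scale q _ hN'X0).
  have h4 : g *m toZp q (N'%:R *: X0) = toZp q (N'%:R *: X0) + N'%:R *: z by rewrite -hz addrC subrK.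
  rewrite h1 scalemxAr -h2 h3 -scalemxAr h4 scalerDr addrC addKr scalerA /M natrM.
  by [].
have hMXi := hMX i; have hMX0i := hMX0 i.
exists M, (numq ((M%:R *: X) i 0) - numq ((M%:R *: X0) i 0)), (z i 0); split.
- by rewrite muln_gt0 hN hN'.
- by rewrite intrB !numqK // !mxE mulrBr.
- have := congr1 (fun v : 'cV[ZP q]_4 => v i 0) E => /=.
  by rewrite !mxE intrB.
Qed.


Lemma Qf_scale D (k : rat) x : Qf D (k *: x) = k ^+ 2 * Qf D x.
Proof. rewrite (vec4E x) scalev4 !Qf4; ring. Qed.

Lemma back_Q D X0 X : in_UX0 D X0 X -> Qf D X = Qf D X0.
Proof.
move=> hU.
have [g [[dg ig tg] [N [hN hNX0 hNX hg]]]] := hU 2%N isT.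
have [i1 e1] := Qf_toZp D 2%N hNX.
have [i0 e0] := Qf_toZp D 2%N hNX0.
have : Qf D (toZp 2%N (N%:R *: X)) = Qf D (toZp 2%N (N%:R *: X0)) by rewrite -hg ig.
rewrite e1 e0 => /(@zp_int_inj 2%N isT _ _) e.
have : Qf D (N%:R *: X) = Qf D (N%:R *: X0) by rewrite -(numqK i1) -(numqK i0) e.
rewrite !Qf_scale => /mulfI; apply.
by rewrite expf_eq0 pnatr_eq0 -lt0n hN.
Qed.

Lemma back_prim D mu m X0 X : inL' D mu -> L0 D m mu X0 -> in_UX0 D X0 X -> primitive D X.
Proof.
move=> hmu [hL0 hQ0 hP0] hU r hr hrX.
have hX0 : inL' D X0 := inL'_shift hmu hL0.
have hq := pdiv_prime hr; set q := pdiv r in hq.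
have hqr : (q %| r)%N := pdiv_dvd r.
have hq0 : (q%:R : rat) != 0 by rewrite pnatr_eq0 -lt0n prime_gt0.
have hr0 : (r%:R : rat) != 0 by rewrite pnatr_eq0 -lt0n ltnW.
have hqX : inL' D ((q%:R)^-1 *: X).
  have -> : (q%:R)^-1 *: X = ((r %/ q)%:Z)%:~R *: ((r%:R)^-1 *: X).
    rewrite scalerA; congr (_ *: _).
    rewrite -{2}(divnK hqr) natrM invfM mulrA (_ : ((r %/ q)%:Z)%:~R = (r %/ q)%:R :> rat) //.
    rewrite mulfV ?mul1r //; rewrite pnatr_eq0 -lt0n divn_gt0 ?prime_gt0 // dvdn_leq // ltnW //.
  move=> y hy; rewrite bil_scalel; apply: rpredM; [exact: rpred_int | exact: hrX].
apply: (hP0 q (prime_gt1 hq)) => y hy.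
have [k hk] : exists k : int, bil D X0 y = k%:~R by apply/ratintP; apply: hX0.
rewrite bil_scalel hk.
have [g [[dg ig tg] [N [hN hNX0 hNX hg]]]] := hU q hq.
have hN0 : (N%:R : rat) != 0 by rewrite pnatr_eq0 -lt0n hN.
have eNX : N%:R *: X = (q * N)%N%:R *: ((q%:R)^-1 *: X).
  by rewrite scalerA natrM mulrAC mulfV // mul1r.
have hqNX : inL ((q * N)%N%:R *: ((q%:R)^-1 *: X)) by rewrite -eNX.
have [s hs] := L'_mult (g *m toZp q y) hqX hqNX.
have [ib eb] := bil_toZp D q hNX0 hy.
have hb : bil D (N%:R *: X0) y = (N%:Z * k)%:~R by rewrite bil_scalel hk intrM.
have e : ((N%:Z * k)%:~R : ZP q) = ((q * N)%N%:R) * s.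
  by rewrite -hs -eNX -hg bil_iso // -(numq_int (N%:Z * k)) -hb -eb.
have e2 : (N%:R : ZP q) * ((k%:~R) - q%:R * s) = 0.
  by rewrite mulrBr -(intrM _ (N%:Z)) e natrM; ring.
have := zp_tf hq hN e2 => /eqP; rewrite subr_eq0 => /eqP e3.
have := @zp_dvd q hq k q s 1 e3; rewrite expr1 dvdzz => /(_ isT) /dvdzP [j ->].
rewrite intrM mulrCA (_ : (q%:Z)%:~R = q%:R :> rat) // mulVf // mulr1; intp.
Qed.


Theorem mainTheorem9 (D : int) (mu : 'cV[rat]_4) (m : rat) (X0 : 'cV[rat]_4) :
  prime_disc D ->
  inL' D mu ->
  (exists k : int, m = k%:~R + Qf D mu) ->
  0 < m ->
  L0 D m mu X0 ->
  forall X : 'cV[rat]_4, L0 D m mu X <-> in_UX0 D X0 X.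
Proof.
move=> _ hmu _ _ h0 X; split; first exact: forward hmu h0.
move=> hU; have [hL0 hQ0 hP0] := h0; split.
- exact: inL_shift (back_L hmu h0 hU) hL0.
- by rewrite (back_Q hU) hQ0.
- exact: back_prim hmu h0 hU.
Qed.
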